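(* For all $m\ge 1$ and all $n\ge m$, $$d_1(W_{n,m},D)\ge \frac{2\big(|m-2|\log n-|(m+2)h_m-3|\big)}{n},$$ where $W_{n,m}=\frac1n C_{n,m}-1$, $C_{n,m}$ is the number of comparisons made by Quickselect to find the $m$-th smallest element of a list of $n$ distinct numbers, $D$ has the standard Dickman distribution, and $h_k=\sum_{j=1}^k 1/j$.
   Context: Quickselect (to find the $m$-th smallest element of a list of $n\ge m$ distinct numbers): a pivot is chosen uniformly at random from the list and compared with each of the other $n-1$ elements; the elements smaller than the pivot form the left sublist and those larger form the right sublist. If the left sublist has size $m-1$, the pivot is the answer and the procedure stops; if it has size $\ge m$, the procedure recurses on the left sublist to find its $m$-th smallest element; otherwise (left size $L<m-1$) it recurses on the right sublist to find its $(m-L-1)$-th smallest element. All pivot choices are independent. The standard Dickman distribution is the unique law of a non-negative random variable $D$ satisfying $D=_d U(D+1)$, where $U\sim\mathcal U[0,1]$ is independent of $D$. The Wasserstein distance is $d_1(X,Y)=\sup_{h\in \mathrm{Lip}_1}|Eh(X)-Eh(Y)|$, where $\mathrm{Lip}_1=\{h:|h(y)-h(x)|\le|y-x|\}$. *)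

(* Defs.v *)
From HB Require Import structures.
From mathcomp Require Import all_boot all_order all_algebra.
From mathcomp Require Import all_classical all_reals all_analysis.
Set Implicit Arguments. Unset Strict Implicit. Unset Printing Implicit Defensive.
Import Order.TTheory GRing.Theory Num.Theory.
Import numFieldNormedType.Exports.
Local Open Scope classical_set_scope.
Local Open Scope ring_scope.

(* Law of the number of comparisons C_{n,m} of Quickselect, as a finite list of
   weighted outcomes (probability, number of comparisons).  [fuel] bounds the
   recursion depth; [qs_law R n n m] is the law of C_{n,m}.  A pivot whose rank is
   L+1 (left sublist of size L, each L < n with probability 1/n) costs n-1
   comparisons; then stop if L = m-1, recurse on (L, m) if L >= m, otherwise on
   (n-L-1, m-L-1). *)
Fixpoint qs_law (R : realType) (fuel n m : nat) : seq (R * nat) :=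
  match fuel with
  | 0 => [::]
  | f.+1 =>
    flatten [seq [seq (pc.1 / n%:R, (pc.2 + n.-1)%N) |
                   pc <- if L.+1 == m then [:: (1, 0%N)]
                         else if (m <= L)%N then qs_law R f L m
                         else qs_law R f (n - L.+1) (m - L.+1)]
            | L <- iota 0 n]
  end.

Definition EW (R : realType) (n m : nat) (h : R -> R) : R :=
  \sum_(pc <- qs_law R n n m) pc.1 * h (pc.2%:R / n%:R - 1).

Definition lip1 (R : realType) (h : R -> R) : Prop :=
  forall x y : R, `|h y - h x| <= `|y - x|.

(* The standard Dickman law: the law of a non-negative random variable D with
   D =_d U (D + 1), U ~ Unif[0,1] independent of D; i.e. for every Borel A,
   P(D in A) = \int_0^1 P(u (D + 1) in A) du. *)
Definition dickman_law (R : realType) (mu : probability R R) : Prop :=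
  mu [set x : R | 0 <= x] = 1%E /\
  forall A : set R, measurable A ->
    mu A = (\int[lebesgue_measure]_(u in [set u : R | (0 <= u <= 1)%R]) mu [set x | A (u * (x + 1))%R])%E.

Definition d1W (R : realType) (mu : probability R R) (n m : nat) : \bar R :=
  ereal_sup [set (`| EW n m h - Rintegral mu setT h |)%:E | h in lip1 (R:=R)].

Definition harm_num (R : realType) (k : nat) : R :=
  \sum_(1 <= j < k.+1) (j%:R)^-1.

(* Main.v *)
Require Import Defs.
From HB Require Import structures.
From mathcomp Require Import all_boot all_order all_algebra.
From mathcomp Require Import all_classical all_reals all_analysis.
From mathcomp Require Import ring lra zify.
From mathcomp Require Import measurable_realfun uniform_distribution beta_distribution unstable.
Import Order.TTheory GRing.Theory Num.Theory.
Import numFieldNormedType.Exports.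
Local Open Scope ring_scope.

Section Dick.
Local Open Scope classical_set_scope.
Local Open Scope ring_scope.
Variables (R : realType) (mu : probability R R).
Hypothesis hD : dickman_law mu.

Let P := uniform_prob (@ltr01 R).
Let Phi (z : (measurableTypeR R * R)%type) : R := z.1 * (z.2 + 1).

Lemma mid : measurable_fun setT (fun x : measurableTypeR R => (x : R)).
Proof. by move=> _ B mB; rewrite setTI. Qed.

Lemma mPhi : measurable_fun setT Phi.
Proof.
apply: measurable_funM; first exact: measurableT_comp mid measurable_fst.
apply: measurable_funD; first exact: measurable_snd.
exact: measurable_cst.
Qed.

Lemma itv01E : [set` `[(0%R : R), 1%R]] = [set u : R | 0 <= u <= 1].
Proof. by apply/seteqP; split => x /=; rewrite in_itv. Qed.

Lemma push_eq A : measurable A -> mu A = pushforward (P \x mu)%E Phi A.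
Proof.
move=> mA.
rewrite /pushforward /product_measure1 /=.
have mA' : measurable (Phi @^-1` A) by rewrite -[_ @^-1` _]setTI; exact: mPhi.
rewrite integral_uniform; last 2 first.
  exact: measurable_fun_xsection.
  by move=> x; exact: measure_ge0.
rewrite subr0 invr1 mul1e itv01E (proj2 hD A mA).
apply: eq_integral => u _.
by rewrite xsectionE.
Qed.

Let N0 := [set x : R | x < 0].

Lemma mS0 : measurable [set x : R | 0 <= x].
Proof.
rewrite (_ : [set x : R | 0 <= x] = [set` `[0, +oo[]); first exact: measurable_itv.
by apply/seteqP; split => x /=; rewrite in_itv /= andbT.
Qed.

Lemma muN0 : mu N0 = 0%E.
Proof.
rewrite (_ : N0 = ~` [set x : R | 0 <= x]); last first.
  apply/seteqP; split => x /=; rewrite /N0 /= => h; [move=> h2; lra | by rewrite ltNge; apply/negP].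
rewrite probability_setC ?mS0 //.
have -> : mu [set x | 0 <= x] = 1%E by exact: (proj1 hD).
by rewrite subee. exact: mS0.
Qed.

Lemma mN0 : measurable N0.
Proof.
rewrite (_ : N0 = [set` `]-oo, 0[]); first exact: measurable_itv.
by apply/seteqP; split => x /=; rewrite in_itv.
Qed.

Lemma ae_pos (f g : R -> \bar R) : (forall x, 0 <= x -> f x = g x) ->
  ae_eq mu setT f g.
Proof.
move=> fg; exists N0; split; [exact: mN0 | exact: muN0 |].
move=> x /= hx; rewrite /N0 /=; rewrite ltNge; apply/negP => h.
by apply: hx => _; apply: fg.
Qed.

Lemma maxM (u y : R) : 0 <= u -> Num.max (u * y) 0 = u * Num.max y 0.
Proof.
by move=> hu; rewrite maxr_pMr // mulr0.
Qed.

Lemma I01 : (\int[lebesgue_measure]_(x in `[(0%R : R), 1%R]) x%:E = (2^-1)%:E)%E.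
Proof.
have c : {within `[(0%R : R), 1%R], continuous id}.
  by apply: continuous_subspaceT => x; exact: cvg_id.
have := @integration_by_substitution_onem R id 1 (ltac:(by rewrite ler01 lexx)) c.
rewrite onem1 /= => e.
have m01 : measurable [set` `[(0%R : R), 1%R]] by exact: measurable_itv.
have hs : (\int[lebesgue_measure]_(x in `[(0%R : R), 1%R]) (x%:E + (x.~)%:E) = 1)%E.
  under eq_integral do rewrite -EFinD /onem addrC subrK.
  rewrite integral_cst // mul1e; have := lebesgue_measure_itv `[(0%R:R), 1%R]; rewrite /= lte01 oppr0 adde0 => <- //.
have f10 : forall x, [set` `[(0%R : R), 1%R]] x -> (0 <= x%:E)%E.
  by move=> x; rewrite /= in_itv /= => /andP [h _]; rewrite lee_fin.
have f20 : forall x, [set` `[(0%R : R), 1%R]] x -> (0 <= (x.~)%:E)%E.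
  by move=> x; rewrite /= in_itv /= => /andP [_ h]; rewrite lee_fin onem_ge0.
have mf1 : measurable_fun [set` `[(0%R : R), 1%R]] (fun x : R => x%:E).
  by apply/measurable_EFinP; apply: measurable_funTS; exact: measurable_id.
have mf2 : measurable_fun [set` `[(0%R : R), 1%R]] (fun x : R => (x.~)%:E).
  by apply/measurable_EFinP; apply: measurable_funB => //; exact: measurable_cst.
rewrite (@ge0_integralD _ _ _ lebesgue_measure _ m01 (fun x : R => x%:E) (fun x => (x.~)%:E) f10 mf1 f20 mf2) in hs.
rewrite -e in hs.
set I := (\int[_]_(x in _) _)%E in hs *.
have I0 : (0 <= I)%E by apply: integral_ge0 => x; rewrite /= in_itv /= => /andP [h _]; rewrite lee_fin.
move: I0 hs; case: I => [r| |] //= I0 hs.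
congr EFin; move: hs => /eqP; rewrite -EFinD eqe => /eqP; lra.
Qed.

Let gp (x : R) : \bar R := (Num.max x 0)%:E.

Lemma mgp : measurable_fun setT gp.
Proof.
apply/measurable_EFinP; apply: measurable_maxr; [exact: measurable_id | exact: measurable_cst].
Qed.

Lemma gp_ge0 x : (0 <= gp x)%E.
Proof. by rewrite lee_fin le_max lexx orbT. Qed.

Lemma mgp1 : measurable_fun setT (fun x : R => gp (x + 1)).
Proof.
rewrite /gp.
apply/measurable_EFinP; apply: measurable_maxr; last exact: measurable_cst.
by apply: measurable_funD; [exact: measurable_id | exact: measurable_cst].
Qed.

Lemma Echain : (\int[mu]_x gp x = (2^-1)%:E * \int[mu]_x gp ((x : R) + 1))%E.
Proof.
rewrite (eq_measure_integral (pushforward (P \x mu)%E Phi)); last first.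
  by move=> A mA *; apply: push_eq.
move=> mPhi'.
rewrite (ge0_integral_pushforward mPhi') //; last 2 first.
  exact: mgp.
  by move=> y _; exact: gp_ge0.
rewrite preimage_setT.
have mf : measurable_fun setT (gp \o Phi) by apply: measurableT_comp; [exact: mgp | exact: mPhi].
have f0 : forall z, (0 <= (gp \o Phi) z)%E by move=> z; exact: gp_ge0.
rewrite (@fubini_tonelli1 _ _ _ _ _ P mu (gp \o Phi) mf f0).
rewrite integral_uniform; last 2 first.
  exact: (measurable_fun_fubini_tonelli_F (m2 := mu) _ mf f0).
  by move=> u; apply: integral_ge0 => x _; exact: gp_ge0.
rewrite subr0 invr1 mul1e.
transitivity (\int[lebesgue_measure]_(u in `[(0%R : R), 1%R]) (u%:E * \int[mu]_x gp ((x : R) + 1)))%E.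
  apply: eq_integral => u; rewrite inE /= in_itv /= => /andP [u0 u1].
  rewrite /fubini_F /=.
  under eq_integral do rewrite /gp /Phi /= maxM // EFinM.
  rewrite ge0_integralZl_EFin //.
  - by move=> x _; exact: gp_ge0.
  - exact: mgp1.
rewrite ge0_integralZr //.
all: try (by rewrite I01).
all: try (by move=> x; rewrite /= in_itv /= => /andP [h _]; rewrite lee_fin).
all: try (by apply: integral_ge0 => x _; exact: gp_ge0).
all: try (by apply/measurable_EFinP; apply: measurable_funTS; exact: measurable_id).
all: exact: mPhi.
Qed.

Lemma maxr0 (x : R) : 0 <= x -> Num.max x 0 = x.
Proof. by move=> h; apply/eqP; rewrite eq_le ge_max lexx h le_max lexx. Qed.

Lemma mgp' : measurable_fun setT (fun x : R => gp x + 1)%E.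
Proof. by apply: emeasurable_funD; [exact: mgp | exact: measurable_cst]. Qed.

Lemma Jeq : (\int[mu]_x gp ((x : R) + 1) = \int[mu]_x gp x + 1)%E.
Proof.
transitivity (\int[mu]_x (gp x + 1))%E.
  apply: ae_eq_integral => //; [exact: mgp1 | exact: mgp' |].
  apply: ae_pos => x hx.
  by rewrite /gp !maxr0 // ?EFinD //; lra.
rewrite ge0_integralD //.
all: try (by move=> x _; exact: gp_ge0).
all: try exact: mgp.
all: try exact: measurable_cst.
rewrite integral_cst //. set X := (X in (_ + 1 * X)%E). have -> : X = 1%E by exact: probability_setT. by rewrite mul1e.
Qed.

Lemma Ecases : let E := (\int[mu]_x gp x)%E in E = 1%E \/ E = +oo%E.
Proof.
move=> E.
have h : E = ((2^-1)%:E * (E + 1))%E by rewrite /E {1}Echain Jeq.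
have E0 : (0 <= E)%E by apply: integral_ge0 => x _; exact: gp_ge0.
move: h E0; case: E => [r| |] //= h E0; [left | by right].
move: h; rewrite -EFinD -EFinM => /eqP; rewrite eqe => /eqP h.
congr EFin; lra.
Qed.

Lemma mEFin_id : measurable_fun setT (fun x : R => x%:E).
Proof. by apply/measurable_EFinP; exact: measurable_id. Qed.

Lemma dmean : Rintegral mu setT (fun x => x) = 1 \/
  (forall c : R, Rintegral mu setT (fun x => x - c) = 0).
Proof.
case: Ecases => hE; [left | right].
  rewrite /Rintegral.
  have -> : (\int[mu]_(x in setT) (x%:E) = \int[mu]_x gp x)%E.
    have H := (@ae_eq_integral _ _ _ mu setT gp); apply: (H (fun x : R => x%:E)) => //; [exact: mEFin_id | exact: mgp |].
    by apply: ae_pos => x hx; rewrite /gp maxr0.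
  by rewrite hE.
move=> c; rewrite /Rintegral.
pose g := fun x : R => ((Num.max x 0 - c)%:E).
have mg : measurable_fun setT g.
  apply/measurable_EFinP; apply: measurable_funB; last exact: measurable_cst.
  by apply: measurable_maxr; [exact: measurable_id | exact: measurable_cst].
have -> : (\int[mu]_(x in setT) ((x - c)%:E) = \int[mu]_x g x)%E.
  have H := (@ae_eq_integral _ _ _ mu setT g); apply: (H (fun x : R => (x - c)%:E)); [exact: measurableT | | exact: mg | ].
    apply/measurable_EFinP; apply: measurable_funB; [exact: measurable_id | exact: measurable_cst].
  by apply: ae_pos => x hx; rewrite /g maxr0.
rewrite integralE.
set cp := Num.max c 0.
have cp0 : 0 <= cp by rewrite le_max lexx orbT.
have ccp : c <= cp by rewrite le_max lexx.
have hneg : (\int[mu]_x g^\- x <= cp%:E)%E.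
  apply: (@le_trans _ _ (\int[mu]_x (cst cp%:E) x)%E).
    apply: ge0_le_integral => //.
    all: try (by move=> x _; exact: funeneg_ge0).
    all: try exact: measurable_funeneg.
    all: try exact: measurable_cst.
    move=> x _; rewrite funenegE /g /= (_ : 0%E = 0%:E) // -EFin_max lee_fin ge_max cp0 andbT.
      have : 0 <= Num.max x 0 by rewrite le_max lexx orbT.
      lra.
  rewrite integral_cst //.
  set X := (X in (_ * X)%E); have -> : X = 1%E by exact: probability_setT.
  by rewrite mule1.
have hneg0 : (0 <= \int[mu]_x g^\- x)%E.
  by apply: integral_ge0 => x _; exact: funeneg_ge0.
have hpos : (\int[mu]_x g^\+ x = +oo)%E.
  have : (\int[mu]_x gp x <= \int[mu]_x (g^\+ x + cp%:E))%E.
    apply: ge0_le_integral => //.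
    all: try (by move=> x _; exact: gp_ge0).
    all: try exact: mgp.
    all: try (by apply: emeasurable_funD; [exact: measurable_funepos | exact: measurable_cst]).
    move=> x _; rewrite funeposE /g /= -EFin_max -EFinD lee_fin.
      have h1 : Num.max x 0 - c <= Num.max (Num.max x 0 - c) 0 by rewrite le_max lexx.
      lra.
  rewrite ge0_integralD //.
  all: try (by move=> x _; exact: funepos_ge0).
  all: try exact: measurable_funepos.
  all: try (by move=> x _; rewrite lee_fin).
  all: try exact: measurable_cst.
  rewrite integral_cst // hE.
  set X := (X in (_ * X)%E); have -> : X = 1%E by exact: probability_setT.
  rewrite mule1 leye_eq.
  set Y := (\int[mu]_x g^\+ x)%E.
  by case: Y => [r| |] //.
rewrite hpos.
move: hneg hneg0; set Z := (\int[mu]_x g^\- x)%E.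
by case: Z => [r| |] //.
Qed.
End Dick.

Section Comb.
Variable R : realType.

Fixpoint H (k : nat) : R := if k is k'.+1 then H k' + (k'.+1%:R)^-1 else 0.
Arguments H : simpl never.

Lemma H0 : H 0 = 0. Proof. by []. Qed.
Lemma HS k : H k.+1 = H k + (k.+1%:R)^-1. Proof. by []. Qed.

Lemma harmE k : harm_num R k = H k.
Proof.
rewrite /harm_num; elim: k => [|k IH]; first by rewrite big_geq.
by rewrite big_nat_recr //= IH HS.
Qed.

Definition G (n m : nat) : R :=
  2 * (n%:R + 3 + (n%:R + 1) * H n - (m%:R + 2) * H m
       - (n%:R + 3 - m%:R) * H (n.+1 - m)).

Lemma natrS' k : (k.+1%:R : R) = k%:R + 1.
Proof. by rewrite -addn1 natrD. Qed.

Lemma nat_ne0 (x : R) k : 0 <= x -> x + k.+1%:R != 0.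
Proof. move=> hx; rewrite natrS'; apply/eqP => h. have := ler0n R k. lra. Qed.

Ltac nzt := repeat (apply/andP; split); try done; apply/eqP => ?; lra.

Definition CA (d m : nat) : R :=
  let N := (d + m)%:R in let M := m%:R in let D := d%:R in
  (N^+2 + 7 * N - M * N - 7 * M) + (N^+2 + N) * H (d + m)
  + (M^+2 + 3 * M - 4 * N - 2 * M * N) * H m + (- D^+2 - 5 * D - 4) * H d.

Lemma CA_ok d k :
  \sum_(L <- iota k.+1 d) G L k.+1 = CA d k.+1.
Proof.
elim: d => [|d IH].
  rewrite big_nil /CA /= add0n H0; set M := (k.+1)%:R; ring.
rewrite -[d.+1]addn1 iotaD big_cat /= big_cons big_nil IH addr0 /CA /G.
have e1: (k.+1 + d = d + k.+1)%N by lia.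
have e2: ((d + k.+1).+1 - k.+1 = d.+1)%N by lia.
have e3: (d + 1 + k.+1 = (d + k.+1).+1)%N by lia.
rewrite e1 e2 e3 addn1 !HS.
rewrite ?(natrD, natrS').
have hd := ler0n R d; have hk := ler0n R k.
field; nzt.
Qed.

Definition CB (d m : nat) : R :=
  let M := m%:R in let D := d%:R in
  (M^+2 + 7 * M - 4 + D * M - D) + (D + M) * (D + M + 1) * H (d + m)
  - M * (M + 3) * H m + (4 - 6 * M - D - 2 * D * M - D^+2) * H d.+1.

Lemma CB_ok d k :
  \sum_(L <- iota 0 k) G (d + L.+1) L.+1 = CB d k.+1.
Proof.
have hd := ler0n R d.
elim: k => [|k IH].
  rewrite big_nil /CB addn1 (HS 0) H0 add0r.
  rewrite ?(natrD, natrS'). field; nzt.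
rewrite -[k.+1]addn1 iotaD big_cat /= big_cons big_nil IH addr0 /CB /G.
have hk := ler0n R k.
have e2: ((d + k.+1).+1 - k.+1 = d.+1)%N by lia.
have e3: (d + (k + 1).+1 = (d + k.+1).+1)%N by lia.
rewrite add0n e2 e3 addn1 !HS.
rewrite ?(natrD, natrS').
field; nzt.
Qed.

Definition tt (n m L : nat) : R :=
  if L.+1 == m then 0 else if (m <= L)%N then G L m else G (n - L.+1) (m - L.+1).

Lemma key d k : let n := (d + k.+1)%N in
  n%:R * G n k.+1 = n%:R * (n%:R - 1) + \sum_(L <- iota 0 n) tt n k.+1 L.
Proof.
move=> n.
have -> : iota 0 n = iota 0 k ++ k :: iota k.+1 d.
  by rewrite /n addnS -addSn addnC iotaD.
rewrite big_cat big_cons /= /tt eqxx add0r.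
rewrite (eq_big_seq (fun L => G (d + (k - L)) (k - L))); last first.
  move=> L; rewrite mem_iota => /andP [h1 h2].
  have -> : (L.+1 == k.+1) = false by apply/negbTE; lia.
  have -> : (k.+1 <= L)%N = false by apply/negbTE; lia.
  by congr G; lia.
rewrite (@eq_big_seq _ _ _ _ (iota k.+1 d) _ (fun L => G L k.+1)); last first.
  move=> L; rewrite mem_iota => /andP [h1 h2].
  have -> : (L.+1 == k.+1) = false by apply/negbTE; lia.
  by rewrite h1.
rewrite CA_ok.
have -> : iota 0 k = index_iota 0 k by rewrite /index_iota subn0.
rewrite big_nat_rev /=.
rewrite (eq_big_nat _ _ (F2 := fun L => G (d + L.+1) L.+1)); last first.
  by move=> L /andP [h1 h2]; congr G; lia.
rewrite -[index_iota 0 k]/(iota 0 (k - 0)) subn0 CB_ok /CB /CA /G.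
have hd := ler0n R d; have hk := ler0n R k.
have e1 : (n.+1 - k.+1 = d.+1)%N by rewrite /n; lia.
rewrite e1 /n !HS.
rewrite ?(natrD, natrS').
field; nzt.
Qed.

Definition Sq (s : seq (R * nat)) : R := \sum_(pc <- s) pc.1.
Definition Tq (s : seq (R * nat)) : R := \sum_(pc <- s) pc.1 * pc.2%:R.

Definition subl f n m L : seq (R * nat) :=
  if L.+1 == m then [:: (1, 0%N)]
  else if (m <= L)%N then qs_law R f L m
  else qs_law R f (n - L.+1) (m - L.+1).

Lemma qs_lawS f n m : qs_law R f.+1 n m =
  flatten [seq [seq (pc.1 / n%:R, (pc.2 + n.-1)%N) | pc <- subl f n m L]
          | L <- iota 0 n].
Proof. by []. Qed.

Lemma Sq_map (s : seq (R * nat)) a b :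
  Sq [seq (pc.1 / a, (pc.2 + b)%N) | pc <- s] = Sq s / a.
Proof. by rewrite /Sq big_map mulr_suml. Qed.

Lemma Tq_map (s : seq (R * nat)) a b :
  Tq [seq (pc.1 / a, (pc.2 + b)%N) | pc <- s] = (Tq s + b%:R * Sq s) / a.
Proof.
rewrite /Tq /Sq big_map mulr_sumr -big_split /= mulr_suml.
by apply: eq_bigr => pc _; rewrite natrD; ring.
Qed.

Lemma qs_ST f n m : (1 <= m)%N -> (m <= n)%N -> (n <= f)%N ->
  Sq (qs_law R f n m) = 1 /\ Tq (qs_law R f n m) = G n m.
Proof.
elim: f n m => [|f IH] n m h1 h2 h3; first by lia.
have hsub : forall L, (L < n)%N ->
    Sq (subl f n m L) = 1 /\ Tq (subl f n m L) = tt n m L.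
  move=> L hL; rewrite /subl /tt.
  case: eqP => [_|hm].
    by rewrite /Sq /Tq !big_cons !big_nil /=; split; ring.
  case: ifP => hmL.
    by apply: IH; lia.
  by apply: IH; lia.
have hn : (n%:R : R) != 0 by rewrite pnatr_eq0; lia.
rewrite qs_lawS; split.
  rewrite /Sq big_flatten big_map /=.
  rewrite (eq_big_seq (fun _ => n%:R^-1)); last first.
    move=> L; rewrite mem_iota => /andP [_ hL].
    by rewrite -/(Sq _) Sq_map (proj1 (hsub L hL)) mul1r.
  have -> : iota 0 n = index_iota 0 n by rewrite /index_iota subn0.
  by rewrite sumr_const_nat subn0 -[_^-1 *+ _]mulr_natr mulVf.
rewrite /Tq big_flatten big_map /=.
rewrite (eq_big_seq (fun L => (tt n m L + n.-1%:R) / n%:R)); last first.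
  move=> L; rewrite mem_iota => /andP [_ hL].
  by rewrite -/(Tq _) Tq_map (proj1 (hsub L hL)) (proj2 (hsub L hL)) mulr1.
rewrite -mulr_suml big_split /=.
have -> : iota 0 n = index_iota 0 n by rewrite /index_iota subn0.
rewrite sumr_const_nat subn0.
clear hsub IH; case: m h1 h2 => [|k] // _ h2.
have [d hdn] : exists d, n = (d + k.+1)%N by exists (n - k.+1)%N; lia.
subst n.
have K := key d k; simpl in K.
rewrite -[index_iota 0 _]/(iota 0 (_ - 0)) subn0.
apply: (mulfI hn); rewrite K.
rewrite -[_ *+ _]mulr_natr addnS /=.
field.
have hd := ler0n R d; have hk := ler0n R k; nzt.
Qed.

Lemma H_ge0 k : 0 <= H k.
Proof. elim: k => [|k IH]; first by rewrite H0. rewrite HS; apply: addr_ge0 => //. Qed.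

Lemma H_le i j : (i <= j)%N -> H i <= H j.
Proof.
move=> /subnK <-; elim: (j - i)%N => [|k IH]; first by rewrite add0n.
by rewrite addSn HS; apply: (le_trans IH); rewrite lerDl.
Qed.

Lemma ln_le_H k : ln (k.+1%:R : R) <= H k.
Proof.
elim: k => [|k IH]; first by rewrite ln1 H0.
have hk : (0 : R) < k.+1%:R by rewrite ltr0n.
have -> : (k.+2%:R : R) = k.+1%:R * (1 + k.+1%:R^-1).
  by rewrite mulrDr mulr1 mulfV ?gt_eqF // natrS'.
have p1 : (0 : R) < 1 + k.+1%:R^-1 by rewrite addr_gt0 // invr_gt0.
rewrite lnM ?posrE //.
rewrite HS; apply: lerD => //; apply: le_ln1Dx.
by apply: (lt_le_trans (y := 0)); rewrite ?ltrN10 // invr_ge0 ltW.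
Qed.

Lemma ln_le_H' k : ln (k%:R : R) <= H k.
Proof.
case: k => [|k]; first by rewrite ln0 ?H0.
apply: (le_trans (ln_le_H k)); apply: H_le; lia.
Qed.

Lemma EW_shift n m c : (1 <= m)%N -> (m <= n)%N ->
  EW n m (fun x => x - c) = G n m / n%:R - 1 - c.
Proof.
move=> h1 h2; have [hS hT] := @qs_ST n n m h1 h2 (leqnn n).
rewrite /EW.
transitivity (Tq (qs_law R n n m) / n%:R - (1 + c) * Sq (qs_law R n n m)).
  rewrite /Tq /Sq mulr_suml mulr_sumr -sumrB; apply: eq_bigr => pc _; ring.
by rewrite hS hT; ring.
Qed.

Lemma bound n m : (1 <= m)%N -> (m <= n)%N ->
  2 * (`|m%:R - 2| * ln (n%:R : R) - `|(m%:R + 2) * harm_num R m - 3|) / n%:R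
  <= `|G n m / n%:R - 1 - 1|.
Proof.
move=> h1 h2; rewrite harmE.
have hn : (0 : R) < n%:R by rewrite ltr0n; lia.
have hL := ln_le_H' n.
have hHn := H_ge0 n.
have -> : G n m / n%:R - 1 - 1 =
   2 * (3 + (n%:R + 1) * H n - (m%:R + 2) * H m - (n%:R + 3 - m%:R) * H (n.+1 - m)) / n%:R.
  by rewrite /G; field; rewrite lt0r_neq0.
have hn' : (0 : R) <= n%:R^-1 by rewrite invr_ge0 ltW.
case: (ltngtP m 1) => hm; first by lia.
  have hm2 : (2 : R) <= m%:R by rewrite (ler_nat R 2 m).
  rewrite (ger0_norm (x := m%:R - 2)); last by rewrite subr_ge0.
  apply: (le_trans _ (ler_norm _)).
  apply: ler_wpM2r => //; apply: ler_wpM2l => //.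
  have hA := ler_norm ((m%:R + 2) * H m - 3).
  have hH' : H (n.+1 - m) <= H n by apply: H_le; lia.
  have hc : (0 : R) <= n%:R + 3 - m%:R.
    have : (m%:R : R) <= n%:R by rewrite ler_nat.
    lra.
  have h3 := ler_wpM2l hc hH'.
  have h4 := ler_wpM2l (x := m%:R - 2) (ltac:(lra)) hL.
  lra.
subst m.
have -> : (n.+1 - 1 = n)%N by lia.
have -> : H 1 = 1 by rewrite (HS 0) H0 add0r invr1.
have -> : 2 * (3 + (n%:R + 1) * H n - (1%:R + 2) * 1 - (n%:R + 3 - 1%:R) * H n) / n%:R
   = - (2 * H n / n%:R) by field; rewrite lt0r_neq0.
have -> : `|1%:R - 2 : R| = 1 by rewrite (_ : 1%:R - 2 = - 1 :> R) ?normrN ?normr1 //; ring.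
have -> : `|(1%:R + 2) * 1 - 3 : R| = 0 by rewrite (_ : (1%:R + 2) * 1 - 3 = 0 :> R) ?normr0 //; ring.
have hp : 0 <= 2 * H n / n%:R by apply: mulr_ge0 => //; apply: mulr_ge0.
rewrite normrN (ger0_norm hp).
apply: ler_wpM2r => //; apply: ler_wpM2l => //.
lra.
Qed.
End Comb.

Lemma dickman_mean (R : realType) (mu : probability R R) : dickman_law mu ->
  Rintegral mu setT (fun x => x) = 1 \/
  (forall c : R, Rintegral mu setT (fun x => x - c) = 0).
Proof. by move=> hD; exact: (@dmean R mu hD). Qed.

Theorem theorem1p3 (R : realType) (mu : probability R R) (m n : nat) :
  dickman_law mu -> (1 <= m)%N -> (m <= n)%N ->
  ((2 * (`|m%:R - 2| * ln (n%:R : R) - `|(m%:R + 2) * harm_num R m - 3|)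
      / n%:R)%:E <= d1W mu n m)%E.
Proof.
move=> hD h1 h2.
have hB := @bound R n m h1 h2.
set B := 2 * _ / _ in hB *.
have mem : forall h, lip1 h ->
    ((`|EW n m h - Rintegral mu setT h|)%:E <= d1W mu n m)%E.
  by move=> h hh; apply: ereal_sup_ubound; exists h.
have lipc : forall c : R, lip1 (fun x => x - c).
  by move=> c x y; rewrite (_ : y - c - (x - c) = y - x) //; ring.
case: (@dickman_mean R mu hD) => [hI | hI].
  apply: (le_trans _ (mem _ (lipc 0))).
  rewrite lee_fin (@EW_shift R n m) // subr0.
  rewrite (_ : (fun x : R => x - 0) = (fun x => x)); last by apply: funext => x; rewrite subr0.
  by rewrite hI.
apply: (le_trans _ (mem _ (lipc (G R n m / n%:R - 1 - `|B|)))).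

rewrite lee_fin (@EW_shift R n m) // hI subr0.
rewrite (_ : G R n m / n%:R - 1 - (G R n m / n%:R - 1 - `|B|) = `|B|); last by ring.
by rewrite normr_id ler_norm.
Qed.
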